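(* Let $\mathcal{T}$ be a set of monomials, and let $\mathcal{L}=(n,\mathcal{M},\mathcal{C})$ be a simple linearization with $\mathcal{S}\cup\mathcal{T}\subseteq\mathcal{M}$ such that every node of $D(\mathcal{L})$ with in-degree $0$ belongs to $\mathcal{T}$. Let $m_1,m_2\in\mathcal{M}$ with $m_1\cap m_2\neq\emptyset$ and $m_1\cap m_2\notin\mathrm{succ}(m_1)\cap\mathrm{succ}(m_2)$. Then $G(D(\mathcal{L}))$ contains a cycle.
   Context: $[n]=\{1,\dots,n\}$; a monomial is a nonempty subset of $[n]$; $\mathcal{S}=\{\{i\}:i\in[n]\}$. A linearization is a triple $\mathcal{L}=(n,\mathcal{M},\mathcal{C})$, where $\mathcal{M}$ is a set of monomials with $\mathcal{S}\subseteq\mathcal{M}$ and $\mathcal{C}$ is a set of AND-constraints; each AND-constraint is a set $c\subseteq\mathcal{M}$ whose union $\bigcup c$ (resultant) lies in $\mathcal{M}$. $\mathcal{P}=\mathcal{M}\setminus\mathcal{S}$. Linearizations are consistent: each $m\in\mathcal{P}$ is the resultant of some $c$ with $|m'|<|m|$ for all $m'\in c$. $\mathcal{L}$ is simple if each proper monomial is the resultant of exactly one AND-constraint and $|\mathcal{C}|=|\mathcal{P}|$. $D(\mathcal{L})$ has node set $\mathcal{M}$ and, for each $c\in\mathcal{C}$, arcs from $\bigcup c$ to each $m\in c$; $G(D(\mathcal{L}))$ is its underlying undirected graph. $\mathrm{succ}(m)$ is the set of nodes reachable from $m$ by a directed path in $D(\mathcal{L})$, including $m$. *)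

(* Defs.v *)
(* [n] = {1..n} is represented by 'I_n = {0..n-1};
   a monomial is a (nonempty) set in {set 'I_n}. *)
From mathcomp Require Import all_boot.
Set Implicit Arguments. Unset Strict Implicit. Unset Printing Implicit Defensive.

Section Lin.
Variable n : nat.
Notation mono := {set 'I_n}.

Definition singletons : {set mono} := [set [set i] | i : 'I_n].

Definition resultant (c : {set mono}) : mono := \bigcup_(m in c) m.

Definition is_linearization (M : {set mono}) (C : {set {set mono}}) : Prop :=
  [/\ (forall m, m \in M -> m != set0),
      singletons \subset M,
      (forall c, c \in C -> c \subset M /\ resultant c \in M) &
      (forall m, m \in M :\: singletons ->
         exists2 c, c \in C & resultant c = m /\
                     (forall m', m' \in c -> #|m'| < #|m|))].

Definition is_simple (M : {set mono}) (C : {set {set mono}}) : Prop :=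
  (forall m, m \in M :\: singletons ->
     exists c, (c \in C /\ resultant c = m) /\
               (forall c', c' \in C -> resultant c' = m -> c' = c)) /\
  #|C| = #|M :\: singletons|.

Definition arc (C : {set {set mono}}) : rel mono :=
  fun u v => [exists c in C, (u == resultant c) && (v \in c)].

Definition succ (C : {set {set mono}}) (m : mono) : {set mono} :=
  [set x | connect (arc C) m x].

Definition indeg0 (M : {set mono}) (C : {set {set mono}}) (v : mono) : bool :=
  (v \in M) && [forall u in M, ~~ arc C u v].

Definition uedge (C : {set {set mono}}) : rel mono :=
  fun u v => arc C u v || arc C v u.

Definition has_ucycle (M : {set mono}) (C : {set {set mono}}) : Prop :=
  exists s : seq mono,
    [/\ 3 <= size s, uniq s, all (fun x => x \in M) s & cycle (uedge C) s].
End Lin.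

(* Main.v *)
Require Import Defs.
From mathcomp Require Import all_boot.
Set Implicit Arguments. Unset Strict Implicit. Unset Printing Implicit Defensive.

Lemma split_first (T : eqType) (a : pred T) x p : has a (x :: p) ->
  exists d g, [/\ p = d ++ g, a (last x d) & forall z, z \in belast x d -> ~~ a z].
Proof.
elim: p x => [|y p IH] x /=.
  rewrite orbF => ax. by exists [::], [::].
case ax: (a x) => /= H.
  by exists [::], (y :: p).
have [d [g [-> ald Hb]]] := IH y H.
exists (y :: d), g; split => //=.
move=> z; rewrite inE => /orP [/eqP -> | /Hb //]; by rewrite ax.
Qed.

Lemma two_paths (T : eqType) (e : rel T) (P : pred T) : symmetric e ->
  forall x p q v, path e x p -> path e x q -> uniq (x :: p) -> uniq (x :: q) ->
  last x p = last x q -> all P (x :: p) -> all P (x :: q) ->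
  v \in x :: p -> v \notin x :: q ->
  exists s, [/\ 3 <= size s, uniq s, all P s & cycle e s].
Proof.
move=> esym x p; elim: p x => [|y p IH] x q v.
  move=> _ _ _ _ _ _ _; rewrite mem_seq1 => /eqP ->; by rewrite mem_head.
case: q => [|z q].
  move=> _ _ /andP [xn _] _ /= Hl; by rewrite -Hl mem_last in xn.
move=> pxp pxq uxp uxq Hl Pxp Pxq vin vnin.
case: (eqVneq y z) => [eyz | nyz].
  subst z.
  have vin' : v \in y :: p.
    move: vin; rewrite in_cons => /orP [/eqP vx | //].
    by rewrite vx mem_head in vnin.
  have vnin' : v \notin y :: q.
    by move: vnin; rewrite in_cons negb_or => /andP [_ ->].
  apply: (IH y q v) => //.
  - by case/andP: pxp.
  - by case/andP: pxq.
  - by case/andP: uxp.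
  - by case/andP: uxq.
  - by case/andP: Pxp.
  - by case/andP: Pxq.
have hq : has (mem (z :: q)) (y :: p).
  apply/hasP; exists (last y p); first exact: mem_last.
  by move: Hl => /= ->; rewrite mem_last.
have [d [g [epd ud Hd]]] := split_first hq.
have hq2 : has (pred1 (last y d)) (z :: q) by apply/hasP; exists (last y d) => //=.
have [d' [g' [eqd ud' Hd']]] := split_first hq2.
have hs : 0 < size d + size d'.
  case: d ud' {epd ud Hd hq2 Hd'} => [|? ?] //; case: d' {eqd} => [|? ?] //=.
  move/eqP => ezy; by rewrite ezy eqxx in nyz.
have sq : {subset z :: d' <= z :: q} by move=> w; rewrite eqd -cat_cons mem_cat => ->.
case/andP: uxp => xnp up; case/andP: uxq => xnq uq.
case/andP: Pxp => Px Pp; case/andP: Pxq => _ Pq.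
have upre : uniq (y :: d).
  have : uniq (y :: p) by [].
  by rewrite epd -cat_cons cat_uniq => /andP [].
have uqpre : uniq (z :: d').
  have : uniq (z :: q) by [].
  by rewrite eqd -cat_cons cat_uniq => /andP [].
have xnd : x \notin y :: d.
  have : x \notin (y :: p) by [].
  by rewrite epd -cat_cons mem_cat negb_or => /andP [].
have xnd' : x \notin z :: d' by apply: contra xnq; apply: sq.
have pd : path e x (y :: d).
  have : path e x (y :: p) by [].
  by rewrite epd -cat_cons cat_path => /andP [].
have pd' : path e x (z :: d').
  have : path e x (z :: q) by [].
  by rewrite eqd -cat_cons cat_path => /andP [].
have Pp' : all P (y :: d).
  have : all P (y :: p) by [].
  by rewrite epd -cat_cons all_cat => /andP [].
have Pq' : all P (z :: d') by apply/allP => w /sq; apply/allP.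
exists (x :: (y :: d) ++ rev (belast z d')); split.
- by rewrite /= size_cat size_rev size_belast /= !ltnS.
- rewrite cons_uniq cat_uniq rev_uniq mem_cat mem_rev negb_or xnd upre /=.
  apply/and3P; split.
  + by apply: contra xnd' => /mem_belast.
  + apply/hasPn => w; rewrite mem_rev => wb.
    have wu := Hd' _ wb.
    apply/negP; rewrite lastI mem_rcons in_cons => /orP [/eqP ewu | wbd].
      by move: wu; rewrite /= ewu eqxx.
    by move: (Hd _ wbd); rewrite /= (sq _ (mem_belast wb)).
  + by move: uqpre; rewrite lastI rcons_uniq => /andP [].
- apply/allP => w; rewrite in_cons mem_cat mem_rev => /orP [/eqP -> // | /orP [wd | wb]]; first by move/allP: Pp'; apply. by move: wb => /mem_belast; apply/allP.
- rewrite /= rcons_cat -rev_cons.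
  have -> : x :: belast z d' = belast x (z :: d') by [].
  rewrite cat_path; apply/and3P; split; [by case/andP: pd | by case/andP: pd | ].
  have -> : last y d = last x (z :: d') by rewrite /= (eqP ud').
  rewrite rev_path.
  rewrite (eq_path (e' := e)); first exact: pd'. by move=> a b; rewrite /= esym.
Qed.

Lemma arc_inv n (C : {set {set {set 'I_n}}}) (u v : {set 'I_n}) :
  Defs.arc C u v -> exists2 c, c \in C & u = resultant c /\ v \in c.
Proof. by case/existsP => c /andP [cC /andP [/eqP -> vc]]; exists c. Qed.

Lemma arc_sub n (C : {set {set {set 'I_n}}}) (u v : {set 'I_n}) :
  Defs.arc C u v -> v \subset u.
Proof. case/arc_inv => c _ [-> vc]; rewrite /resultant; exact: bigcup_sup. Qed.

Lemma arcM n (M : {set {set 'I_n}}) (C : {set {set {set 'I_n}}}) (u v : {set 'I_n}) :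
  is_linearization M C -> Defs.arc C u v -> u \in M /\ v \in M.
Proof.
case=> _ _ H3 _ /arc_inv [c cC [-> vc]]; have [cM rM] := H3 c cC.
by split => //; apply: (subsetP cM).
Qed.

Lemma arc_lt n (M : {set {set 'I_n}}) (C : {set {set {set 'I_n}}}) (u v : {set 'I_n}) :
  is_linearization M C -> is_simple M C -> Defs.arc C u v -> #|v| < #|u|.
Proof.
move=> [H1 H2 H3 H4] [Hs Hcard] /arc_inv [c cC [-> vc]].
have rP : resultant c \in M :\: singletons n.
  pose C' := [set c in C | resultant c \in M :\: singletons n].
  have sub : C' \subset C by apply/subsetP => c'; rewrite inE => /andP [].
  have : M :\: singletons n \subset (@resultant n) @: C'.
    apply/subsetP => m mP; have [c1 [[c1C e1] _]] := Hs m mP.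
    apply/imsetP; exists c1 => //; by rewrite inE c1C e1 mP.
  move/subset_leq_card => le1.
  have le2 := leq_imset_card (@resultant n) C'.
  have eqC : C' == C by rewrite eqEcard sub Hcard (leq_trans le1 le2).
  by move: cC; rewrite -(eqP eqC) inE => /andP [].
have [c0 c0C [r0 lt0]] := H4 _ rP.
have [c1 [_ U]] := Hs _ rP.
have e0 := U c0 c0C r0; have e := U c cC erefl.
by apply: lt0; rewrite e0 -e.
Qed.

Lemma conn_sub n (C : {set {set {set 'I_n}}}) (u v : {set 'I_n}) :
  connect (Defs.arc C) u v -> v \subset u.
Proof.
move/connectP => [p pth ->]; elim: p u pth => [|w p IH] u /=; first by rewrite subxx.
move=> /andP [a pth]; exact: subset_trans (IH _ pth) (arc_sub a).
Qed.

Lemma single n (M : {set {set 'I_n}}) (C : {set {set {set 'I_n}}}) (m : {set 'I_n}) i :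
  is_linearization M C -> m \in M -> i \in m -> connect (Defs.arc C) m [set i].
Proof.
move=> Hl; have [H1 H2 H3 H4] := Hl.
have [k] := ubnP #|m|; elim: k m => // k IH m ltm mM im.
case: (boolP (m \in singletons n)) => [/imsetP [j _ ej] | ns].
  by move: im; rewrite ej inE => /eqP ->; exact: connect0.
have mP : m \in M :\: singletons n by rewrite inE ns mM.
have [c cC [rc lt]] := H4 _ mP.
move: im; rewrite -rc => /bigcupP [m' m'c im'].
have m'M : m' \in M by have [cM _] := H3 c cC; apply: (subsetP cM).
apply: connect_trans (connect1 _) (IH m' (leq_trans (lt m' m'c) ltm) m'M im').
by apply/existsP; exists c; rewrite cC rc eqxx m'c.
Qed.

Lemma pathM n (M : {set {set 'I_n}}) (C : {set {set {set 'I_n}}}) x p :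
  is_linearization M C -> x \in M -> path (Defs.arc C) x p -> all (fun y => y \in M) (x :: p).
Proof.
move=> Hl; elim: p x => [|y p IH] x xM /=; first by rewrite xM.
move=> /andP [a pth]; rewrite xM; exact: (IH y (arcM Hl a).2 pth).
Qed.

Lemma path_uniq n (M : {set {set 'I_n}}) (C : {set {set {set 'I_n}}}) x p :
  is_linearization M C -> is_simple M C -> path (Defs.arc C) x p -> uniq (x :: p).
Proof.
move=> Hl Hs pth.
apply: (@sorted_uniq _ (fun a b : {set 'I_n} => #|b| < #|a|)).
- by move=> a b c h1 h2; exact: ltn_trans h2 h1.
- by move=> a; exact: ltnn.
- have sr : subrel (Defs.arc C) (fun a b : {set 'I_n} => #|b| < #|a|) by move=> a b; exact: arc_lt Hl Hs.
  exact: sub_path sr _ _ pth.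
Qed.

Lemma conn_last (T : finType) (e : rel T) x p z :
  path e x p -> z \in x :: p -> connect e z (last x p).
Proof.
elim: p x z => [|y p IH] x z /=; first by move=> _; rewrite mem_seq1 => /eqP ->; exact: connect0.
move=> /andP [a pth]; rewrite in_cons => /orP [/eqP -> | zin]; last exact: IH.
exact: connect_trans (connect1 a) (IH y y pth (mem_head y p)).
Qed.

Definition vp (T : Type) (m2 : T) d1 d2 := d1 ++ rev (belast m2 d2).

Lemma Vpath n (M : {set {set 'I_n}}) (C : {set {set {set 'I_n}}}) (m1 m2 w : {set 'I_n}) d1 d2 :
  is_linearization M C -> is_simple M C -> m1 \in M -> m2 \in M ->
  path (Defs.arc C) m1 d1 -> last m1 d1 = w -> path (Defs.arc C) m2 d2 -> last m2 d2 = w ->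
  (forall z, z \in m1 :: d1 -> z \in m2 :: d2 -> z = w) ->
  [/\ path (uedge C) m1 (vp m2 d1 d2), uniq (m1 :: vp m2 d1 d2),
      last m1 (vp m2 d1 d2) = m2 & all (fun x => x \in M) (m1 :: vp m2 d1 d2)] /\
  (w \in m1 :: vp m2 d1 d2 /\
   forall z, z \in m1 :: vp m2 d1 d2 -> connect (Defs.arc C) z w).
Proof.
move=> Hl Hs m1M m2M pd1 l1 pd2 l2 disj.
have ue : subrel (Defs.arc C) (uedge C) by move=> a b h; rewrite /uedge h.
have usym : symmetric (uedge C) by move=> a b; rewrite /uedge orbC.
have A1 := pathM Hl m1M pd1; have A2 := pathM Hl m2M pd2.
have u2 := path_uniq Hl Hs pd2.
rewrite (lastI m2 d2) l2 rcons_uniq in u2; case/andP: u2 => wnb ub.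
have memv z : z \in m1 :: vp m2 d1 d2 -> z \in m1 :: d1 \/ z \in belast m2 d2.
  by rewrite /vp -cat_cons mem_cat mem_rev => /orP [] ?; [left | right].
split; [split | split].
- rewrite /vp cat_path (sub_path ue pd1) /= l1 -l2 rev_path.
  have psym : path (fun a b => uedge C b a) m2 d2 = path (uedge C) m2 d2.
    by apply: eq_path => a b; exact: usym.
  by rewrite psym; exact: sub_path ue _ _ pd2.
- rewrite /vp -cat_cons cat_uniq rev_uniq (path_uniq Hl Hs pd1) ub has_rev andbT /=.
  apply/hasPn => z zb; apply/negP => z1.
  have ez := disj z z1 (mem_belast zb).
  by rewrite ez in zb; rewrite zb in wnb.
- rewrite /vp last_cat l1.
  case: d2 pd2 l2 {A2 wnb ub disj memv} => [|y d2'] /= _ l2; first by rewrite l2.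
  by rewrite rev_cons last_rcons.
- apply/allP => z /memv [z1 | zb]; first by move/allP: A1; apply.
  by move/allP: A2; apply; exact: mem_belast.
- by rewrite /vp -cat_cons mem_cat -l1 mem_last.
- move=> z /memv [z1 | zb]; first by rewrite -l1; exact: conn_last pd1 z1.
  by rewrite -l2; exact: conn_last pd2 (mem_belast zb).
Qed.

Theorem lemma4p3 (n : nat) (M : {set {set 'I_n}}) (C : {set {set {set 'I_n}}})
    (T : {set {set 'I_n}}) (m1 m2 : {set 'I_n}) :
  is_linearization M C ->
  is_simple M C ->
  singletons n :|: T \subset M ->
  (forall v, indeg0 M C v -> v \in T) ->
  m1 \in M -> m2 \in M ->
  m1 :&: m2 != set0 ->
  m1 :&: m2 \notin succ C m1 :&: succ C m2 ->
  has_ucycle M C.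
Proof.
move=> Hl Hs HST Hin0 m1M m2M Hne Hnot.
have [i iP] := set0Pn _ Hne.
have Si : [set i] \in succ C m1 :&: succ C m2.
  move: iP; rewrite !inE => /andP [i1 i2].
  by rewrite (single Hl m1M i1) (single Hl m2M i2).
case: (@arg_maxnP _ [set i] (fun x => x \in succ C m1 :&: succ C m2) (fun x => #|x|) Si)
  => w wS wmax.
move: (wS); rewrite !inE => /andP [cw1 cw2].
have wsub : w \subset m1 :&: m2 by rewrite subsetI (conn_sub cw1) (conn_sub cw2).
have [j jP jw] : exists2 j, j \in m1 :&: m2 & j \notin w.
  apply/subsetPn; apply/negP => sub.
  have e : w = m1 :&: m2 by apply/eqP; rewrite eqEsubset wsub sub.
  by move: Hnot; rewrite -e wS.
move: (jP); rewrite inE => /andP [j1 j2].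
case/connectP: (single Hl m1M j1) => e1 pe1 le1.
case/connectP: (single Hl m2M j2) => e2 pe2 le2.
have hh : has (mem (m2 :: e2)) (m1 :: e1).
  apply/hasP; exists (last m1 e1); first exact: mem_last.
  by rewrite /= -le1 le2 mem_last.
have [d [g [ee1 wd Hd]]] := split_first hh.
have hh2 : has (pred1 (last m1 d)) (m2 :: e2) by apply/hasP; exists (last m1 d) => //=.
have [d' [g' [ee2 wd' Hd']]] := split_first hh2.
have pd : path (Defs.arc C) m1 d by move: pe1; rewrite ee1 cat_path => /andP [].
have pd' : path (Defs.arc C) m2 d' by move: pe2; rewrite ee2 cat_path => /andP [].
have l2 : last m2 d' = last m1 d by apply/eqP.
have disj' : forall z, z \in m1 :: d -> z \in m2 :: d' -> z = last m1 d.
  move=> z z1 z2; move: z1; rewrite (lastI m1 d) mem_rcons in_cons => /orP [/eqP // | zb].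
  have := Hd z zb; rewrite /= ee2 -cat_cons mem_cat.
  by move: z2 => /= ->.
have w'S : last m1 d \in succ C m1 :&: succ C m2.
  rewrite !inE (path_connect pd (mem_last m1 d)) /=.
  by rewrite -l2 (path_connect pd' (mem_last m2 d')).
have jw' : j \in last m1 d.
  have : last m1 d \in m1 :: e1 by rewrite ee1 -cat_cons mem_cat mem_last.
  move/(conn_last pe1); rewrite -le1 => /conn_sub /subsetP; apply; exact: set11.
case/connectP: cw1 => dw1 pw1 lw1.
case/connectP: cw2 => dw2 pw2 lw2.
have disj : forall z, z \in m1 :: dw1 -> z \in m2 :: dw2 -> z = w.
  move=> z z1 z2.
  have zS : z \in succ C m1 :&: succ C m2.
    by rewrite !inE (path_connect pw1 z1) (path_connect pw2 z2).
  have := conn_last pw1 z1; rewrite -lw1 => /conn_sub wz.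
  have := wmax z zS => zw.
  by apply/eqP; rewrite eq_sym eqEcard wz; exact: zw.
have [[Pa Ua La Aa] [Ma Ca]] := Vpath Hl Hs m1M m2M pd erefl pd' l2 disj'.
have [[Pb Ub Lb Ab] [Mb Cb]] := Vpath Hl Hs m1M m2M pw1 (esym lw1) pw2 (esym lw2) disj.
have usym : symmetric (uedge C) by move=> a b; rewrite /uedge orbC.
have nin : last m1 d \notin m1 :: vp m2 dw1 dw2.
  apply/negP => win.
  have := Cb _ win => /conn_sub ww'.
  have := wmax _ w'S => le.
  have e : w = last m1 d by apply/eqP; rewrite eqEcard ww'; exact: le.
  by rewrite e jw' in jw.
have [s [s1 s2 s3 s4]] := two_paths (P := fun x => x \in M) usym Pa Pb Ua Ub
  (etrans La (esym Lb)) Aa Ab Ma nin.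
by exists s.
Qed.
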